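(* Let $k$ be a commutative ring over which every finitely generated projective module is free, and let $A$ be a $k$-linear semi-Hopf category (i.e. a semi-Hopf $\mathcal V$-category for $\mathcal V=\mathsf{Mod}_k$) with object set $X$ such that each $A_{x,y}$ is finitely generated projective (hence free of finite rank), and such that for all $x,y\in X$ with $A_{x,y}\neq0$ the ranks of $A_{x,y}$ and $A_{y,y}$ coincide. If $s=\{s_{xy}\}$ is a right antipode of $A$, then $s$ is also a left antipode, hence an antipode, and $A$ is a Hopf category.
   Context: $\mathsf{Mod}_k$ has the usual tensor product and symmetry. A $k$-linear category $A$ with object set $X$: $k$-modules $A_{x,y}$, $k$-bilinear compositions $m_{xyz}\colon A_{x,y}\otimes A_{y,z}\to A_{x,z}$ and units $j_x\colon k\to A_{x,x}$, associative and unital. Semi-Hopf: each $A_{x,y}$ is a $k$-coalgebra $(\delta_{xy},\epsilon_{xy})$ and all $m_{xyz},j_x$ are coalgebra morphisms. Right antipode: $k$-linear maps $s_{xy}\colon A_{x,y}\to A_{y,x}$ with $m_{xyx}\circ(1\otimes s_{xy})\circ\delta_{xy}=j_x\circ\epsilon_{xy}$ (in Sweedler notation $a_{(1)}s_{xy}(a_{(2)})=\epsilon_{xy}(a)1_x$); left antipode: $m_{yxy}\circ(s_{xy}\otimes1)\circ\delta_{xy}=j_y\circ\epsilon_{xy}$; antipode: both. *)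

(* Defs.v *)
From HB Require Import structures.
From mathcomp Require Import all_boot all_order all_algebra.
Set Implicit Arguments. Unset Strict Implicit. Unset Printing Implicit Defensive.
Import GRing.Theory.
Local Open Scope ring_scope.

Section Defs.
Variable k : comPzRingType.

Definition klinear (M N : lmodType k) (f : M -> N) : Prop :=
  forall (c : k) (u v : M), f (c *: u + v) = c *: f u + f v.
Definition kform (M : lmodType k) (f : M -> k) : Prop :=
  forall (c : k) (u v : M), f (c *: u + v) = c * f u + f v.
Definition kbilinear (M N P : lmodType k) (b : M -> N -> P) : Prop :=
  (forall u, klinear (b u)) /\ (forall v, klinear (fun u => b u v)).
Definition ktrilinear (M N O P : lmodType k) (t : M -> N -> O -> P) : Prop :=
  (forall u v, klinear (t u v)) /\ (forall u w, klinear (fun v => t u v w))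
  /\ (forall v w, klinear (fun u => t u v w)).

(* Elements of M (x) N are represented by finite lists of pure tensors
   [:: (m1,n1); ...] standing for m1 (x) n1 + ...; two lists represent the
   same element iff every bilinear map takes the same value on them
   (universal property of the tensor product). Same for M (x) N (x) O. *)
Definition tensor_eq (M N : lmodType k) (s t : seq (M * N)) : Prop :=
  forall (P : lmodType k) (b : M -> N -> P), kbilinear b ->
    \sum_(p <- s) b p.1 p.2 = \sum_(p <- t) b p.1 p.2.
Definition tensor3_eq (M N O : lmodType k) (s t : seq (M * N * O)) : Prop :=
  forall (P : lmodType k) (b : M -> N -> O -> P), ktrilinear b ->
    \sum_(p <- s) b p.1.1 p.1.2 p.2 = \sum_(p <- t) b p.1.1 p.1.2 p.2.

(* finitely generated projective = direct summand of some k^n *)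
Definition fg_projective (M : lmodType k) : Prop :=
  exists n (f : 'rV[k]_n -> M) (g : M -> 'rV[k]_n),
    klinear f /\ klinear g /\ cancel g f.
Definition free_of_rank (M : lmodType k) (n : nat) : Prop :=
  exists f : 'rV[k]_n -> M, klinear f /\ bijective f.
Definition fgproj_free : Prop :=
  forall M : lmodType k, fg_projective M -> exists n, free_of_rank M n.

Section Cat.
Variables (X : Type) (A : X -> X -> lmodType k).
(* composition m_{xyz} (as a bilinear map), units j_x(1) = unit x *)
Variables (m : forall x y z, A x y -> A y z -> A x z) (unit : forall x, A x x).
Variables (delta : forall x y, A x y -> seq (A x y * A x y))
          (eps : forall x y, A x y -> k).

Definition is_kcategory : Prop :=
  [/\ forall x y z, kbilinear (@m x y z),
      forall x y z w (a : A x y) (b : A y z) (c : A z w),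
        m (m a b) c = m a (m b c),
      forall x y (a : A x y), m (unit x) a = a &
      forall x y (a : A x y), m a (unit y) = a].

Definition is_coalgebra (M : lmodType k) (d : M -> seq (M * M)) (e : M -> k)
  : Prop :=
  [/\ forall (c : k) (a b : M),
        tensor_eq (d (c *: a + b))
          ([seq (c *: p.1, p.2) | p <- d a] ++ d b),
      kform e,
      forall a, tensor3_eq
        [seq (q.1, q.2, p.2) | p <- d a, q <- d p.1]
        [seq (p.1, q.1, q.2) | p <- d a, q <- d p.2],
      forall a, \sum_(p <- d a) e p.1 *: p.2 = a &
      forall a, \sum_(p <- d a) e p.2 *: p.1 = a].

Definition is_semiHopf_category : Prop :=
  [/\ is_kcategory /\ forall x y, is_coalgebra (@delta x y) (@eps x y),
      forall x y z (a : A x y) (b : A y z),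
        tensor_eq (delta (m a b))
          [seq (m p.1 q.1, m p.2 q.2) | p <- delta a, q <- delta b],
      forall x y z (a : A x y) (b : A y z), eps (m a b) = eps a * eps b,
      forall x, tensor_eq (delta (unit x)) [:: (unit x, unit x)] &
      forall x, eps (unit x) = 1].

Definition is_right_antipode (s : forall x y, A x y -> A y x) : Prop :=
  (forall x y, klinear (@s x y)) /\
  forall x y (a : A x y),
    \sum_(p <- delta a) m p.1 (s _ _ p.2) = eps a *: unit x.

Definition is_left_antipode (s : forall x y, A x y -> A y x) : Prop :=
  (forall x y, klinear (@s x y)) /\
  forall x y (a : A x y),
    \sum_(p <- delta a) m (s _ _ p.1) p.2 = eps a *: unit y.

Definition is_antipode s := is_right_antipode s /\ is_left_antipode s.

Definition is_Hopf_category : Prop :=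
  is_semiHopf_category /\ exists s, is_antipode s.

End Cat.
End Defs.

(* Main.v *)
Require Import Defs.
From HB Require Import structures.
From mathcomp Require Import all_boot all_order all_algebra.
From Stdlib Require Import FunctionalExtensionality Classical.
Set Implicit Arguments. Unset Strict Implicit. Unset Printing Implicit Defensive.
Import GRing.Theory.
Local Open Scope ring_scope.

Section Gen.
Context {k : comPzRingType}.

Lemma kl0 (M N : lmodType k) (f : M -> N) : klinear f -> f 0 = 0.
Proof.
move=> Hf; have := Hf 1 0 0; rewrite !scale1r addr0.
by move=> /(congr1 (fun t => t - f 0)) /=; rewrite subrr addrK => <-.
Qed.
Lemma klD (M N : lmodType k) (f : M -> N) : klinear f -> forall u v, f (u + v) = f u + f v.
Proof. by move=> Hf u v; have := Hf 1 u v; rewrite !scale1r. Qed.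
Lemma klZ (M N : lmodType k) (f : M -> N) : klinear f -> forall c u, f (c *: u) = c *: f u.
Proof. by move=> Hf c u; have := Hf c u 0; rewrite !addr0 (kl0 Hf) addr0. Qed.
Lemma kl_sum (M N : lmodType k) (f : M -> N) : klinear f ->
  forall I (r : seq I) (F : I -> M), f (\sum_(i <- r) F i) = \sum_(i <- r) f (F i).
Proof. by move=> Hf I r F; apply: (big_morph f (klD Hf) (kl0 Hf)). Qed.
Lemma kl_comp (M N P : lmodType k) (f : M -> N) (g : N -> P) :
  klinear f -> klinear g -> klinear (fun x => g (f x)).
Proof. by move=> Hf Hg c u v; rewrite Hf Hg. Qed.
Lemma kf0 (M : lmodType k) (f : M -> k) : kform f -> f 0 = 0.
Proof.
move=> Hf; have := Hf 1 0 0; rewrite !scale1r addr0 mul1r.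
by move=> /(congr1 (fun t => t - f 0)) /=; rewrite subrr addrK => <-.
Qed.

Definition lin1 n (f : 'rV[k]_n -> 'rV[k]_n) : 'M[k]_n := \matrix_(i < n) f (delta_mx 0 i).

Lemma lin1E n (f : 'rV[k]_n -> 'rV[k]_n) : klinear f -> forall v, f v = v *m lin1 f.
Proof.
move=> Hf v; rewrite mulmx_sum_row {1}(row_sum_delta v) (kl_sum Hf).
by apply: eq_bigr => i _; rewrite (klZ Hf) rowK.
Qed.

Lemma lin_inv n (T U : 'rV[k]_n -> 'rV[k]_n) : klinear T -> klinear U ->
  (forall w, T (U w) = w) -> forall v, U (T v) = v.
Proof.
move=> HT HU TU.
have QP : lin1 U *m lin1 T = 1%:M.
  apply/row_matrixP => i; rewrite !rowE mulmxA -(lin1E HU) -(lin1E HT).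
  by rewrite TU mulmx1.
move=> v; rewrite (lin1E HT) (lin1E HU) -mulmxA (mulmx1C QP) mulmx1 //.
Qed.
End Gen.
Section Cat.
Variables (k : comPzRingType) (X : Type) (A : X -> X -> lmodType k)
  (m : forall x y z, A x y -> A y z -> A x z) (unit : forall x, A x x)
  (delta : forall x y, A x y -> seq (A x y * A x y))
  (eps : forall x y, A x y -> k).
Hypothesis HA : is_semiHopf_category m unit delta eps.
Variable s : forall x y, A x y -> A y x.
Hypothesis Hs : is_right_antipode m unit delta eps s.

Lemma mlin2 x y z (u : A x y) : klinear (@m x y z u).
Proof. by case: HA => [[[Hm _ _ _] _] _ _ _ _]; case: (Hm x y z). Qed.
Lemma mlin1 x y z (v : A y z) : klinear (fun u : A x y => m u v).
Proof. by case: HA => [[[Hm _ _ _] _] _ _ _ _]; case: (Hm x y z). Qed.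
Lemma mA x y z w (a : A x y) (b : A y z) (c : A z w) : m (m a b) c = m a (m b c).
Proof. by case: HA => [[[_ H _ _] _] _ _ _ _]. Qed.
Lemma m1l x y (a : A x y) : m (unit x) a = a.
Proof. by case: HA => [[[_ _ H _] _] _ _ _ _]. Qed.
Lemma m1r x y (a : A x y) : m a (unit y) = a.
Proof. by case: HA => [[[_ _ _ H] _] _ _ _ _]. Qed.
Lemma coal x y : is_coalgebra (@delta x y) (@eps x y).
Proof. by case: HA => [[_ H] _ _ _ _]. Qed.
Lemma slin x y : klinear (@s x y).
Proof. by case: Hs. Qed.
Lemma epslin x y : kform (@eps x y).
Proof. by case: (coal x y). Qed.

Lemma dlin x y (B : lmodType k) (b : A x y -> A x y -> B) : kbilinear b ->
  forall c a a', \sum_(p <- delta (c *: a + a')) b p.1 p.2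
   = c *: \sum_(p <- delta a) b p.1 p.2 + \sum_(p <- delta a') b p.1 p.2.
Proof.
move=> Hb c a a'; case: (coal x y) => Hd _ _ _ _.
rewrite (Hd c a a' B b Hb) big_cat big_map /= scaler_sumr; congr (_ + _).
by apply: eq_bigr => p _; rewrite (klZ (Hb.2 p.2)).
Qed.

Lemma klinear_sumd x y (B : lmodType k) (b : A x y -> A x y -> B) : kbilinear b ->
  klinear (fun a => \sum_(p <- delta a) b p.1 p.2).
Proof. by move=> Hb c a a'; apply: dlin. Qed.

Variables x y : X.

Definition L (g : A x y -> A y y) : A x y -> A x y :=
  fun a => \sum_(p <- delta a) m p.1 (g p.2).
Definition R (h : A x y -> A x y) : A x y -> A y y :=
  fun a => \sum_(p <- delta a) m (@s _ _ p.1) (h p.2).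

Lemma L_lin g : klinear g -> klinear (L g).
Proof.
move=> Hg; apply: (klinear_sumd (b := fun u v => m u (g v))); split.
  by move=> u; apply: kl_comp Hg (mlin2 _).
by move=> v; apply: mlin1.
Qed.
Lemma R_lin h : klinear h -> klinear (R h).
Proof.
move=> Hh; apply: (klinear_sumd (b := fun u v => m (@s _ _ u) (h v))); split.
  by move=> u; apply: kl_comp Hh (mlin2 _).
by move=> v; exact: (kl_comp (@slin x y) (mlin1 (h v))).
Qed.
Lemma L_add c g1 g2 :
  L (fun a => c *: g1 a + g2 a) = fun a => c *: L g1 a + L g2 a.
Proof.
apply: functional_extensionality => a; rewrite /L scaler_sumr -big_split /=.
by apply: eq_bigr => p _; rewrite (mlin2 _).
Qed.
Lemma R_add c g1 g2 :
  R (fun a => c *: g1 a + g2 a) = fun a => c *: R g1 a + R g2 a.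
Proof.
apply: functional_extensionality => a; rewrite /R scaler_sumr -big_split /=.
by apply: eq_bigr => p _; rewrite (mlin2 _).
Qed.

Lemma LR h : klinear h -> L (R h) = h.
Proof.
move=> Hh; apply: functional_extensionality => a; rewrite /L /R.
case: (coal x y) => _ _ Hco Hc1 _.
transitivity (\sum_(t <- [seq (p.1, q.1, q.2) | p <- delta a, q <- delta p.2])
   m t.1.1 (m (@s _ _ t.1.2) (h t.2))).
  rewrite big_allpairs_dep; apply: eq_bigr => p _ /=.
  by rewrite (kl_sum (mlin2 _)).
rewrite -(Hco a _ (fun u v w => m u (m (@s _ _ v) (h w)))); last first.
  split; first by move=> u v; apply: kl_comp (mlin2 _); apply: kl_comp Hh (mlin2 _).
  split; first by move=> u w; apply: kl_comp (mlin2 _); apply: kl_comp (@slin _ _) (mlin1 _).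
  by move=> v w; apply: mlin1.
rewrite big_allpairs_dep /=.
rewrite -[X in _ = h X](Hc1 a) (kl_sum Hh); apply: eq_bigr => p _.
rewrite (klZ Hh).
under eq_bigr do rewrite -mA.
rewrite -(kl_sum (mlin1 _)) (proj2 Hs) (klZ (mlin1 _)).
by rewrite m1l.
Qed.

Lemma L0 : L (fun a => eps a *: unit y) = id.
Proof.
apply: functional_extensionality => a; rewrite /L.
case: (coal x y) => _ _ _ _ Hc2.
rewrite -{2}(Hc2 a); apply: eq_bigr => p _.
by rewrite (klZ (mlin2 _)) m1r.
Qed.

End Cat.
Section Transport.
Context {k : comPzRingType}.
Variables (V W : lmodType k) (r : nat) (f1 : 'rV[k]_r -> V) (g1 : V -> 'rV[k]_r)
  (fB : 'rV[k]_r -> W) (gB : W -> 'rV[k]_r).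
Hypotheses (Hf1 : klinear f1) (Hg1 : klinear g1) (Hfg1 : cancel f1 g1) (Hgf1 : cancel g1 f1)
  (HfB : klinear fB) (HgB : klinear gB) (HfgB : cancel fB gB) (HgfB : cancel gB fB).

Definition Phi (v : 'rV[k]_(r * r)) : V -> W := fun a => fB (g1 a *m vec_mx v).
Definition Psi (h : V -> W) : 'rV[k]_(r * r) :=
  mxvec (\matrix_(i < r) gB (h (f1 (delta_mx 0 i)))).

Lemma mulmx_lin n (M : 'M[k]_(r, n)) : klinear (fun u : 'rV[k]_r => u *m M).
Proof. by move=> c u v; rewrite mulmxDl scalemxAl. Qed.

Lemma Phi_lin v : klinear (Phi v).
Proof. exact: kl_comp (kl_comp Hg1 (mulmx_lin _)) HfB. Qed.

Lemma Phi_add c v w : Phi (c *: v + w) = fun a => c *: Phi v a + Phi w a.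
Proof.
apply: functional_extensionality => a; rewrite /Phi -HfB.
have -> : vec_mx (c *: v + w) = c *: vec_mx v + vec_mx w.
  by apply/matrixP => i j; rewrite !mxE.
by rewrite mulmxDr scalemxAr.
Qed.

Lemma Psi_add c h1 h2 : Psi (fun a => c *: h1 a + h2 a) = c *: Psi h1 + Psi h2.
Proof.
rewrite /Psi.
set M1 := \matrix_(i < r) gB (h1 (f1 (delta_mx 0 i))).
set M2 := \matrix_(i < r) gB (h2 (f1 (delta_mx 0 i))).
have -> : \matrix_(i < r) gB (c *: h1 (f1 (delta_mx 0 i)) + h2 (f1 (delta_mx 0 i)))
   = c *: M1 + M2.
  apply/row_matrixP => i; rewrite rowK HgB raddfD /=.
  have -> : row i (c *: M1) = c *: row i M1 by apply/rowP => j; rewrite !mxE.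
  by rewrite /M1 /M2 !rowK.
rewrite -[RHS]vec_mxK; congr mxvec; apply/matrixP => i j; rewrite !mxE !mxvecE.
by rewrite !mxE.
Qed.

Lemma PhiPsi h : klinear h -> Phi (Psi h) = h.
Proof.
move=> Hh; apply: functional_extensionality => a; rewrite /Phi /Psi mxvecK.
set F := fun u => gB (h (f1 u)).
have HF : klinear F by apply: kl_comp (kl_comp Hf1 Hh) HgB.
have -> : \matrix_(i < r) gB (h (f1 (delta_mx 0 i))) = lin1 F by [].
by rewrite -(lin1E HF) /F Hgf1 HgfB.
Qed.

Lemma PsiPhi v : Psi (Phi v) = v.
Proof.
rewrite /Psi /Phi; apply: (can_inj vec_mxK); rewrite mxvecK.
apply/row_matrixP => i; rewrite rowK HfgB Hfg1 rowE //.
Qed.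
End Transport.
Lemma bij_inv {k : comPzRingType} (V : lmodType k) n (f : 'rV[k]_n -> V) :
  klinear f -> bijective f ->
  exists g, [/\ klinear g, cancel f g & cancel g f].
Proof.
move=> Hf [g fg gf]; exists g; split => // c u v.
by rewrite -{1}(gf u) -{1}(gf v) -Hf fg.
Qed.

Section Main.
Variables (k : comPzRingType) (X : Type) (A : X -> X -> lmodType k)
  (m : forall x y z, A x y -> A y z -> A x z) (unit : forall x, A x x)
  (delta : forall x y, A x y -> seq (A x y * A x y))
  (eps : forall x y, A x y -> k).
Hypothesis HA : is_semiHopf_category m unit delta eps.
Variable s : forall x y, A x y -> A y x.
Hypothesis Hs : is_right_antipode m unit delta eps s.

Lemma left_xy x y (Hr : (exists a : A x y, a != 0) ->
     exists n, free_of_rank (A x y) n /\ free_of_rank (A y y) n) (a : A x y) :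
  \sum_(p <- delta a) m (@s _ _ p.1) p.2 = eps a *: unit y.
Proof.
case: (classic (exists a : A x y, a != 0)) => [nz|z]; last first.
  have all0 : forall b : A x y, b = 0.
    by move=> b; case: (eqVneq b 0) => // nb; exfalso; apply: z; exists b.
  rewrite big1; last by move=> p _; rewrite (all0 p.1) (kl0 (slin Hs (x:=x) (y:=y))) (kl0 (mlin1 HA (x:=y) (y:=x) (z:=y) p.2)).
  by rewrite (all0 a) (kf0 (epslin HA (x:=x) (y:=y))) scale0r.
have [n [[f1 [Hf1 Hb1]] [f2 [Hf2 Hb2]]]] := Hr nz.
have [g1 [Hg1 fg1 gf1]] := bij_inv Hf1 Hb1.
have [g2 [Hg2 fg2 gf2]] := bij_inv Hf2 Hb2.
pose Phi1 := Phi g1 f1; pose Psi1 := Psi f1 g1.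
pose Phi2 := Phi g1 f2; pose Psi2 := Psi f1 g2.
pose LL := L m delta (x:=x) (y:=y); pose RR := R m delta s (x:=x) (y:=y).
pose T v := Psi1 (LL (Phi2 v)); pose U w := Psi2 (RR (Phi1 w)).
have Phi1l w : klinear (Phi1 w) by apply: Phi_lin.
have Phi2l w : klinear (Phi2 w) by apply: Phi_lin.
have TU w : T (U w) = w.
  rewrite /T /U /Phi2 /Psi2 PhiPsi //; last exact: (R_lin HA Hs (Phi1l w)).
  by rewrite /LL /RR (LR HA Hs) // /Psi1 /Phi1 PsiPhi.
have HT : klinear T.
  move=> c v w; rewrite /T /Phi2 Phi_add //.
  transitivity (Psi1 (fun a => c *: LL (Phi2 v) a + LL (Phi2 w) a)).
    by congr Psi1; exact: (L_add HA).
  by rewrite /Psi1 Psi_add.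
have HU : klinear U.
  move=> c v w; rewrite /U /Phi1 Phi_add //.
  transitivity (Psi2 (fun a => c *: RR (Phi1 v) a + RR (Phi1 w) a)).
    by congr Psi2; exact: (R_add HA).
  by rewrite /Psi2 Psi_add.
have UT := lin_inv HT HU TU.
pose g0 := fun b : A x y => eps b *: unit y.
have Hg0 : klinear g0.
  by move=> c u v; rewrite /g0 (epslin HA) scalerDl scalerA.
have idl : klinear (@id (A x y)) by [].
have key : RR id = g0.
  have := UT (Psi2 g0).
  rewrite /T /U /Phi2 PhiPsi // /LL (L0 HA) /Psi1 /Phi1 PhiPsi // => /(congr1 Phi2).
  rewrite /Phi2 !PhiPsi //; exact: (R_lin HA Hs idl).
by have := congr1 (fun F => F a) key.
Qed.
End Main.

Theorem mainTheorem9 (k : comPzRingType) (Hk : fgproj_free k)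
  (X : Type) (A : X -> X -> lmodType k)
  (m : forall x y z, A x y -> A y z -> A x z) (unit : forall x, A x x)
  (delta : forall x y, A x y -> seq (A x y * A x y))
  (eps : forall x y, A x y -> k)
  (HA : is_semiHopf_category m unit delta eps)
  (Hfg : forall x y, fg_projective (A x y))
  (Hrank : forall x y, (exists a : A x y, a != 0) ->
     exists n, free_of_rank (A x y) n /\ free_of_rank (A y y) n)
  (s : forall x y, A x y -> A y x)
  (Hs : is_right_antipode m unit delta eps s) :
  is_left_antipode m unit delta eps s /\ is_antipode m unit delta eps s /\
  is_Hopf_category m unit delta eps.
Proof.
have Hl : is_left_antipode m unit delta eps s.
  split; first by case: Hs.
  by move=> x y a; exact: (left_xy HA Hs (Hrank x y) a).
have Ha : is_antipode m unit delta eps s by split.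
split=> //; split=> //; split=> //; by exists s.
Qed.
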